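(* Let $f:\mathbb{R}^n\to\mathbb{R}^n$ be continuous and let $\mu\ge0$. Suppose that for every $x\in\mathbb{R}^n$, $f$ admits a strict $\mu$-estimator $h_x$ at $x$ which is strongly regular around $x$, and that $$\sigma_f:=\inf_{x\in\mathbb{R}^n}\operatorname{lop}(h_x,x)>\mu.$$ Then $f$ is a bijection of $\mathbb{R}^n$ onto $\mathbb{R}^n$ and $f^{-1}$ is Lipschitz continuous on $\mathbb{R}^n$ with constant $(\sigma_f-\mu)^{-1}$.
   Context: $B^\circ(x,r)$ denotes the open ball. $\operatorname{lip}(g,\bar x)$ is the infimum of all $\ell>0$ such that $\|g(x_1)-g(x_2)\|\le\ell\|x_1-x_2\|$ on some neighbourhood of $\bar x$ ($+\infty$ if none). Given $\mu\ge0$, $h$ is a strict $\mu$-estimator of $f$ at $\bar x$ if $h(\bar x)=f(\bar x)$ and $\operatorname{lip}(f-h,\bar x)\le\mu$. $h$ is linearly open around $\bar x$ if there exist $\alpha>0$ and neighbourhoods $U$ of $\bar x$, $V$ of $h(\bar x)$ with $B^\circ(h(x),\alpha r)\cap V\subseteq h(B^\circ(x,r))$ for all $x\in U$, $r>0$; $\operatorname{lop}(h,\bar x)$ is the supremum of such $\alpha$ ($0$ if none). $h$ is strongly regular around $\bar x$ if it is linearly open around $\bar x$ and there exist neighbourhoods $U$ of $\bar x$ and $V$ of $h(\bar x)$ such that $h^{-1}(y)\cap U$ is a singleton for every $y\in V$. *)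

(* Defs.v *)
(* R^n is 'rV[R]_n with its standard (product)
   topology; the norm used for balls and Lipschitz estimates is the
   Euclidean norm [enorm]. *)
From HB Require Import structures.
From mathcomp Require Import all_boot all_order all_algebra.
From mathcomp Require Import all_classical all_reals all_analysis.
Set Implicit Arguments. Unset Strict Implicit. Unset Printing Implicit Defensive.
Import Order.TTheory GRing.Theory Num.Theory numFieldNormedType.Exports.
Local Open Scope classical_set_scope.
Local Open Scope ring_scope.

Section Defs.
Variables (R : realType) (n : nat).
Local Notation V := 'rV[R]_n.

Definition enorm (v : V) : R := Num.sqrt (\sum_(i < n) v ord0 i ^+ 2).

Definition oball (x : V) (r : R) : set V := [set y | enorm (y - x) < r].

Definition lip_near (g : V -> V) (xb : V) (l : R) : Prop :=
  exists U : set V, nbhs xb U /\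
    forall x1 x2, U x1 -> U x2 -> enorm (g x1 - g x2) <= l * enorm (x1 - x2).

Definition lip (g : V -> V) (xb : V) : \bar R :=
  ereal_inf [set (l%:E)%E | l in [set l : R | 0 < l /\ lip_near g xb l]].

Definition strict_estimator (mu : R) (f h : V -> V) (xb : V) : Prop :=
  h xb = f xb /\ (lip (fun x => (f x - h x)%R) xb <= mu%:E)%E.

Definition lin_open_with (h : V -> V) (xb : V) (alpha : R) : Prop :=
  exists (U W : set V), nbhs xb U /\ nbhs (h xb) W /\
    forall x r, U x -> 0 < r -> oball (h x) (alpha * r) `&` W `<=` h @` oball x r.

Definition lin_open (h : V -> V) (xb : V) : Prop :=
  exists2 alpha, 0 < alpha & lin_open_with h xb alpha.

Definition lop (h : V -> V) (xb : V) : \bar R :=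
  ereal_sup ([set 0%E] `|`
    [set (a%:E)%E | a in [set a : R | 0 < a /\ lin_open_with h xb a]]).

Definition strongly_regular (h : V -> V) (xb : V) : Prop :=
  lin_open h xb /\
  exists (U W : set V), nbhs xb U /\ nbhs (h xb) W /\
    forall y, W y -> exists! x, U x /\ h x = y.

End Defs.

(* Main.v *)
Require Import Defs.
From mathcomp Require Import all_boot all_order all_algebra.
From mathcomp Require Import all_classical all_reals all_analysis.
From mathcomp Require Import ring lra.
Import Order.TTheory GRing.Theory Num.Theory numFieldNormedType.Exports.
Local Open Scope classical_set_scope.
Local Open Scope ring_scope.
Set Implicit Arguments. Unset Strict Implicit. Unset Printing Implicit Defensive.

Section Enorm.
Variables (R : realType) (n : nat).
Local Notation V := 'rV[R]_n.
Local Notation en := (@enorm R n).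

Lemma enorm_ge0 (v : V) : 0 <= en v.
Proof. exact: sqrtr_ge0. Qed.

Lemma enorm0 : en 0 = 0.
Proof. by rewrite /enorm big1 ?sqrtr0 // => i _; rewrite mxE expr0n. Qed.

Lemma enormN (v : V) : en (- v) = en v.
Proof. by rewrite /enorm; congr Num.sqrt; apply: eq_bigr => i _; rewrite mxE sqrrN. Qed.

Lemma enorm_eq0 (v : V) : en v = 0 -> v = 0.
Proof.
move=> /eqP; rewrite /enorm sqrtr_eq0 => H.
have H0 : \sum_(i < n) v ord0 i ^+ 2 = 0.
  by apply/eqP; rewrite eq_le H sumr_ge0 // => i _; rewrite sqr_ge0.
apply/rowP => i; rewrite mxE.
have := @psumr_eq0P _ _ xpredT _ (fun j _ => sqr_ge0 (v ord0 j)) H0 i isT.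
by move/eqP; rewrite sqrf_eq0 => /eqP.
Qed.

Lemma enormZ (k : R) (v : V) : en (k *: v) = `|k| * en v.
Proof.
rewrite /enorm (eq_bigr (fun i => k ^+ 2 * v ord0 i ^+ 2)); last first.
  by move=> i _; rewrite mxE exprMn.
by rewrite -mulr_sumr sqrtrM ?sqr_ge0 // sqrtr_sqr.
Qed.

Lemma enorm_sqr (v : V) : en v ^+ 2 = \sum_(i < n) v ord0 i ^+ 2.
Proof. by rewrite sqr_sqrtr // sumr_ge0 // => i _; rewrite sqr_ge0. Qed.

Lemma enorm_dot (u v : V) :
  \sum_(i < n) u ord0 i * v ord0 i <= en u * en v.
Proof.
set A := en u; set B := en v.
have hA : 0 <= A := enorm_ge0 u. have hB : 0 <= B := enorm_ge0 v.
have key : 2 * (A * B) * \sum_(i < n) u ord0 i * v ord0 i <= 2 * (A * B) * (A * B).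
  rewrite mulr_sumr.
  apply: (@le_trans _ _ (\sum_(i < n) (u ord0 i ^+ 2 * B ^+ 2 + v ord0 i ^+ 2 * A ^+ 2))).
    apply: ler_sum => i _.
    rewrite -subr_ge0.
    have -> : u ord0 i ^+ 2 * B ^+ 2 + v ord0 i ^+ 2 * A ^+ 2 - 2 * (A * B) * (u ord0 i * v ord0 i)
      = (u ord0 i * B - v ord0 i * A) ^+ 2 by rewrite /GRing.exp /=; ring.
    exact: sqr_ge0.
  rewrite big_split /= -!mulr_suml -!enorm_sqr -/A -/B.
  by rewrite le_eqVlt; apply/orP; left; apply/eqP; ring.
have [AB0|ABpos] := eqVneq (A * B) 0.
  move: AB0 => /eqP; rewrite mulf_eq0 => /orP [] /eqP /enorm_eq0 ->;
  by rewrite big1 ?mulr_ge0 // => i _; rewrite mxE ?mul0r ?mulr0.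
have hp : 0 < 2 * (A * B) by rewrite mulr_gt0 // lt0r ABpos mulr_ge0.
by rewrite -(ler_pM2l hp).
Qed.

Lemma enormD (u v : V) : en (u + v) <= en u + en v.
Proof.
have hA := enorm_ge0 u; have hB := enorm_ge0 v.
rewrite -(ger0_norm (addr_ge0 hA hB)) -sqrtr_sqr {1}/enorm ler_sqrt ?sqr_ge0 //.
rewrite (eq_bigr (fun i => u ord0 i ^+ 2 + v ord0 i ^+ 2 + 2 * (u ord0 i * v ord0 i))); last first.
  by move=> i _; rewrite mxE /GRing.exp /=; ring.
rewrite !big_split /= -mulr_sumr -!enorm_sqr.
have := enorm_dot u v.
set S := \sum_(i < n) _. move=> hS.
have -> : (en u + en v) ^+ 2 = en u ^+ 2 + en v ^+ 2 + 2 * (en u * en v)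
  by rewrite /GRing.exp /=; ring.
by rewrite lerD2l ler_pM2l.
Qed.

Lemma enormB (u v : V) : en (u - v) <= en u + en v.
Proof. by rewrite -(enormN v) enormD. Qed.

Lemma enorm_sym (u v : V) : en (u - v) = en (v - u).
Proof. by rewrite -enormN opprB. Qed.

Lemma enorm_tri (u v w : V) : en (u - w) <= en (u - v) + en (v - w).
Proof. by have := enormD (u - v) (v - w); rewrite addrA subrK. Qed.

Lemma enorm_rev (u v : V) : `| en u - en v | <= en (u - v).
Proof.
have h1 := enormD (u - v) v; rewrite subrK in h1.
have h2 := enormD (v - u) u; rewrite subrK enorm_sym in h2.
by rewrite ler_norml; apply/andP; split; lra.
Qed.

Lemma coord_le_enorm (v : V) i : `|v ord0 i| <= en v.
Proof.
rewrite -sqrtr_sqr /enorm ler_sqrt ?sumr_ge0 // => [|j _]; last exact: sqr_ge0.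
rewrite (bigD1 i) //= lerDl sumr_ge0 // => j _; exact: sqr_ge0.
Qed.

Lemma mx_le_enorm (v : V) : `|v| <= en v.
Proof.
rewrite [`|v|]mx_normrE; apply: bigmax_le => [|[i j] _]; first exact: enorm_ge0.
by rewrite /= (ord1 i); exact: coord_le_enorm.
Qed.

Lemma coord_le_mx (v : V) i : `|v ord0 i| <= `|v|.
Proof.
rewrite [`|v|]mx_normrE.
exact: (@le_bigmax _ _ _ 0 (fun ij : 'I_1 * 'I_n => `|v ij.1 ij.2|) (ord0, i)).
Qed.

Lemma enorm_le_mx (v : V) : en v <= n%:R * `|v|.
Proof.
have h0 : 0 <= `|v| := normr_ge0 v.
rewrite -(ger0_norm (mulr_ge0 (ler0n _ n) h0)) -sqrtr_sqr /enorm ler_sqrt ?sqr_ge0 //.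
apply: (@le_trans _ _ (\sum_(i < n) `|v| ^+ 2)).
  apply: ler_sum => i _; rewrite -real_normK ?num_real //.
  by apply: lerXn2r; rewrite ?nnegrE ?normr_ge0 ?coord_le_mx.
rewrite sumr_const card_ord exprMn -mulr_natl mulr1 -[_ *+ n]mulr_natl ler_wpM2r ?sqr_ge0 //.
by rewrite -natrX ler_nat; case: n => // k; rewrite expnS leq_pmulr.
Qed.

End Enorm.

Section Topo.
Variables (R : realType) (n : nat).
Local Notation V := 'rV[R]_n.
Local Notation en := (@enorm R n).

Lemma nbhs_enorm (x : V) (U : set V) :
  nbhs x U -> exists2 e, 0 < e & forall y, en (y - x) < e -> U y.
Proof.
move=> /nbhs_ballP [e e0 sub]; exists e => // y hy; apply: sub.
rewrite -ball_normE /ball_ /= -normrN opprB.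
exact: (le_lt_trans (mx_le_enorm (y - x)) hy).
Qed.

Lemma enorm_nbhs (x : V) (U : set V) e :
  0 < e -> (forall y, en (y - x) < e -> U y) -> nbhs x U.
Proof.
move=> e0 H; apply/nbhs_ballP.
have n1 : 0 < n%:R + 1 :> R by rewrite ltr_wpDl.
exists (e / (n%:R + 1)); first by rewrite /= divr_gt0.
move=> y; rewrite -ball_normE /ball_ /= -normrN opprB => hy; apply: H.
apply: (le_lt_trans (enorm_le_mx _)).
rewrite ltr_pdivlMr // mulrC in hy.
apply: le_lt_trans hy; rewrite ler_wpM2r // lerDl //.
Qed.

Lemma cont_real (F : V -> R) :
  (forall x e, 0 < e -> exists2 d, 0 < d &
     forall y, en (y - x) < d -> `|F y - F x| < e) -> continuous F.
Proof.
move=> H x A /nbhs_ballP [e e0 sub].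
have [d d0 hd] := H x e e0.
apply: (enorm_nbhs d0) => y /hd hy; apply: sub.
by rewrite -ball_normE /ball_ /= distrC.
Qed.

Lemma cont_V (f : V -> V) : continuous f ->
  forall x e, 0 < e -> exists2 d, 0 < d &
     forall y, en (y - x) < d -> en (f y - f x) < e.
Proof.
move=> cf x e e0.
have : nbhs (f x) [set z | en (z - f x) < e] by apply: (enorm_nbhs e0).
by move=> /(cf x) /nbhs_enorm [d d0 hd]; exists d.
Qed.

Lemma compact_enorm (A : set V) (u : V) r :
  closed A -> (forall z, A z -> en (z - u) <= r) -> compact A.
Proof.
move=> cA hA; apply: bounded_closed_compact => //.
rewrite /bounded_near.
apply: (@filterS _ _ _ [set M | r + en u <= M]); last first.
  by apply: nbhs_pinfty_ge; rewrite num_real.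
move=> M /= hM z /hA hz.
apply: (le_trans (mx_le_enorm _)).
have := enormD (z - u) u; rewrite subrK => hz2.
apply: (le_trans hz2); apply: le_trans hM; by rewrite lerD2r.
Qed.

Lemma en_cont (x : V) : continuous (fun z : V => en (z - x)).
Proof.
apply: (@cont_real (fun z => en (z - x))) => z e e0; exists e => // y hy.
apply: le_lt_trans (enorm_rev _ _) _.
by rewrite opprB addrA subrK.
Qed.

Lemma ekeland (phi : V -> R) (x : V) (k : R) :
  0 < k -> continuous phi -> (forall z, 0 <= phi z) ->
  (forall z, k * en (z - x) <= phi x - phi z -> 0 < phi z ->
     exists z', phi z' < phi z /\ phi z' + k * en (z' - x) <= phi z + k * en (z - x)) ->
  exists z, phi z = 0 /\ k * en (z - x) <= phi x.
Proof.
move=> k0 cphi phi0 step.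
pose G := fun z => phi z + k * en (z - x).
have cG : continuous G.
  move=> z.
  have hm : {for z, continuous (fun z : V => k * en (z - x))}.
    apply: (@cont_real (fun z : V => k * en (z - x))) => w e e0.
    exists (e / k); first by rewrite divr_gt0.
    move=> y hy; rewrite -mulrBr normrM gtr0_norm // mulrC -ltr_pdivlMr //.
    apply: le_lt_trans (enorm_rev _ _) _.
    by rewrite opprB addrA subrK.
  exact: (@continuousD R R^o _ phi (fun z : V => k * en (z - x)) z (cphi z) hm).
pose S := [set z | G z <= phi x].
have cS : compact S.
  apply: (@compact_enorm _ x (phi x / k)).
    by apply: (@preimage_closed _ _ G [set r | r <= phi x]); [move=> z _; exact: cG | exact: closed_le].
  move=> z; rewrite /S /G /= => hz; rewrite ler_pdivlMr // mulrC.
  have := phi0 z; lra.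
have S0 : S !=set0 by exists x; rewrite /S /G /= subrr enorm0 mulr0 addr0.
have [z Sz zmin] := compact_EVT_min S0 cS (@continuous_subspaceT _ _ S phi cphi).
move: Sz; rewrite inE /S /G /= => Sz.
have [zpos|] := ltrP 0 (phi z); last first.
  move=> zle; have hz : phi z = 0 by apply/eqP; rewrite eq_le zle phi0.
  by exists z; split => //; move: Sz; rewrite hz; lra.
have [z' [lt' le']] := step z ltac:(lra) zpos.
have : phi z <= phi z' by apply: zmin; rewrite inE /S /G /=; lra.
lra.
Qed.
End Topo.

Section Global.
Variables (R : realType) (n : nat).
Local Notation V := 'rV[R]_n.
Local Notation en := (@enorm R n).

Definition LOc (f : V -> V) (c : R) (x : V) := exists2 e0, 0 < e0 &
  forall y, en (y - f x) < e0 -> exists z, f z = y /\ c * en (z - x) <= en (y - f x).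

Definition LIc (f : V -> V) (x : V) := exists2 d, 0 < d &
  forall u v, en (u - x) < d -> en (v - x) < d -> f u = f v -> u = v.

Lemma phi_cont (f : V -> V) (y : V) : continuous f -> continuous (fun z => en (f z - y)).
Proof.
move=> cf; apply: (@cont_real _ _ (fun z => en (f z - y))) => z e e0.
have [d d0 hd] := cont_V cf z e0; exists d => // w /hd hw.
apply: le_lt_trans (enorm_rev _ _) _.
by rewrite opprB addrA subrK.
Qed.

Lemma GO (f : V -> V) (c : R) : 0 < c -> continuous f -> (forall x, LOc f c x) ->
  forall x y, exists z, f z = y /\ c * en (z - x) <= en (y - f x).
Proof.
move=> c0 cf lo x y.
have [||z [hz1 hz2]] := @ekeland _ _ (fun z => en (f z - y)) x c c0 (phi_cont cf).
- by move=> z; exact: enorm_ge0.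
- move=> z _ zpos; have [e0 e00 he0] := lo z.
  set E := en (f z - y).
  have E0 : 0 < E by exact: zpos.
  pose t := Num.min (1/2) (e0 / (2 * E)).
  have t0 : 0 < t.
    by rewrite /t lt_min; apply/andP; split; [lra | rewrite divr_gt0 // mulr_gt0].
  have t1 : t <= 1/2 by rewrite /t ge_min lexx.
  have t2 : t <= e0 / (2 * E) by rewrite /t ge_min lexx orbT.
  have tE : t * E <= e0 / 2.
    by rewrite -ler_pdivlMr // (le_trans t2) // invfM mulrA mulrAC.
  have [z' [hz'1 hz'2]] : exists z', f z' = f z + t *: (y - f z) /\
      c * en (z' - z) <= en (f z + t *: (y - f z) - f z).
    apply: he0; rewrite [f z + _]addrC addrK enormZ gtr0_norm // [en (y - f z)]enorm_sym.
    rewrite -/E; lra.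
  move: hz'2; rewrite [f z + _]addrC addrK enormZ gtr0_norm // [en (y - f z)]enorm_sym -/E => hz'2.
  have ephi : en (f z' - y) = (1 - t) * E.
    rewrite hz'1 -(@ger0_norm _ (1 - t)); last by lra.
    rewrite -enormZ; congr en; apply/rowP => i; rewrite !mxE; ring.
  exists z'; rewrite ephi; split; first by nra.
  have htri := enorm_tri z' z x.
  have := ler_wpM2l (ltW c0) htri; rewrite mulrDr.
  move=> h3; lra.
- exists z; split; last by rewrite [en (y - f x)]enorm_sym.
  by apply/eqP; rewrite -subr_eq0; apply/eqP/enorm_eq0.
Qed.

End Global.

Lemma near_cov_unif (R : realType) (X : topologicalType) (K : set X) (P : R -> X -> Prop) :
  compact K -> (forall x, K x -> exists A, exists2 e, nbhs x A /\ 0 < e &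
     forall x' d, A x' -> 0 < d -> d < e -> P d x') ->
  exists2 d, 0 < d & forall x, K x -> P d x.
Proof.
move=> cK H.
have hnear : \forall d \near (0:R)^'+, K `<=` P d.
  apply: (compact_near_coveringP K).1 => // x Kx.
  have [A [e [hA e0] HP]] := H x Kx.
  exists (A, [set d | 0 < d /\ d < e]).
    split => //=; exists e => //= d.
    rewrite /ball_ /= sub0r normrN => hd d0; split => //.
    by rewrite gtr0_norm in hd.
  by move=> [x' d] /= [Ax [d0 de]]; exact: HP.
have [d []] : exists d, (K `<=` P d) /\ 0 < d.
  have Fap : ProperFilter ((0:R)^'+) by exact: at_right_proper_filter.
  exact: (filter_ex (filterI hnear (nbhs_right_gt (0:R)))).
move=> hd d0.
by exists d => // x Kx; exact: hd.
Qed.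

Lemma nbhsR_lt (R : realType) (s0 : R) r (A : set R) : 0 < r ->
  (forall s, `|s - s0| < r -> A s) -> nbhs s0 A.
Proof.
move=> r0 H; apply/nbhs_ballP; exists r => // s.
by rewrite -ball_normE /ball_ /= distrC; exact: H.
Qed.

Lemma cont_realR (R : realType) (F : R -> R) :
  (forall x e, 0 < e -> exists2 d, 0 < d &
     forall y, `|y - x| < d -> `|F y - F x| < e) -> continuous F.
Proof.
move=> H x A /nbhs_ballP [e e0 sub].
have [d d0 hd] := H x e e0.
apply: (nbhsR_lt d0) => y /hd hy; apply: sub.
by rewrite -ball_normE /ball_ /= distrC.
Qed.

Section Unif.
Variables (R : realType) (n : nat).
Local Notation V := 'rV[R]_n.
Local Notation en := (@enorm R n).

Lemma unif_LI (f : V -> V) (K : set V) : compact K -> (forall x, LIc f x) ->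
  exists2 d, 0 < d & forall u, K u -> forall v, en (v - u) < d -> f v = f u -> v = u.
Proof.
move=> cK li.
apply: (@near_cov_unif R _ K (fun d u => forall v, en (v - u) < d -> f v = f u -> v = u) cK).
move=> x Kx; have [d d0 hd] := li x.
exists [set x' | en (x' - x) < d / 2]; exists (d / 2).
  by split; [apply: (@enorm_nbhs _ _ _ _ (d/2)) => //; lra | lra].
move=> x' e /= hx' e0 ed v hv fv.
apply: hd => //; last lra.
have := enorm_tri v x' x; lra.
Qed.

End Unif.

Section Inj.
Variables (R : realType) (n : nat).
Local Notation V := 'rV[R]_n.
Local Notation en := (@enorm R n).
Variables (f : V -> V) (c : R) (a b : V).
Hypotheses (c0 : 0 < c) (cf : continuous f) (lo : forall x, LOc f c x)
  (li : forall x, LIc f x) (fab : f a = f b).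

Let y0 := f a.
Let xs (s : R) : V := a + s *: (b - a).
Let ell (s : R) := f (xs s).

Let xs_dist s t : en (xs s - xs t) = `|s - t| * en (b - a).
Proof.
rewrite -enormZ; congr en; apply/rowP => i; rewrite !mxE; ring.
Qed.

Let ell_cont s0 e : 0 < e -> exists2 d, 0 < d &
  forall s, `|s - s0| < d -> en (ell s - ell s0) < e.
Proof.
move=> e0; have [d d0 hd] := cont_V cf (xs s0) e0.
have hb := enorm_ge0 (b - a).
exists (d / (en (b - a) + 1)); first by rewrite divr_gt0 //; lra.
move=> s hs; apply: hd; rewrite xs_dist.
rewrite ltr_pdivlMr in hs; last lra.
have := normr_ge0 (s - s0); nra.
Qed.

Let ellM : exists2 M, 0 <= M & forall s, 0 <= s <= 1 -> en (ell s - y0) <= M.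
Proof.
have ne : `[(0:R), 1]%classic !=set0 by exists 0; rewrite /= in_itv /= lexx ler01.
have cc : {within `[(0:R), 1]%classic, continuous (fun s => en (ell s - y0))}.
  apply: continuous_subspaceT; apply: cont_realR => s0 e e0.
  have [d d0 hd] := ell_cont s0 e0; exists d => // s /hd hs.
  apply: le_lt_trans (enorm_rev _ _) _; by rewrite opprB addrA subrK.
have [s1 _ hs1] := compact_EVT_max ne (@segment_compact _ 0 1) cc.
exists (en (ell s1 - y0)); first exact: enorm_ge0.
by move=> s hs; apply: hs1; rewrite inE /= in_itv.
Qed.

Let rp (N : nat) (w : V) (k : nat) : V := y0 + (k%:R / N%:R) *: (w - y0).

Let islift N w (z : nat -> V) := z 0%N = a /\ forall k, (k < N)%N ->
  f (z k.+1) = rp N w k.+1 /\ c * en (z k.+1 - z k) <= en (rp N w k.+1 - rp N w k).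

Let rp_diff N w1 w2 k : en (rp N w2 k - rp N w1 k) = k%:R / N%:R * en (w2 - w1).
Proof.
have -> : rp N w2 k - rp N w1 k = (k%:R / N%:R) *: (w2 - w1).
  by apply/rowP => i; rewrite !mxE; ring.
by rewrite enormZ ger0_norm // divr_ge0.
Qed.

Let rp_step N w k : en (rp N w k.+1 - rp N w k) = en (w - y0) / N%:R.
Proof.
have -> : rp N w k.+1 - rp N w k = (N%:R)^-1 *: (w - y0).
  rewrite /rp opprD addrACA subrr add0r -scalerBl; congr (_ *: _).
  by rewrite -mulrBl -[k.+1]addn1 natrD addrAC subrr add0r mul1r.
by rewrite enormZ ger0_norm ?invr_ge0 // mulrC.
Qed.

Let rp0 N w : rp N w 0 = y0.
Proof. by rewrite /rp mul0r scale0r addr0. Qed.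

Let rpN N w : (0 < N)%N -> rp N w N = w.
Proof.
move=> N0; rewrite /rp divff; last by rewrite pnatr_eq0 -lt0n.
by rewrite scale1r addrC subrK.
Qed.

Let kN_le1 (N k : nat) : (k <= N)%N -> k%:R / N%:R <= 1 :> R.
Proof.
case: N => [|N] kN; first by rewrite invr0 mulr0 ler01.
by rewrite ler_pdivrMr ?mul1r ?ler_nat // ltr0n.
Qed.

Let GOf := GO c0 cf lo.

Let lift_ex N w : exists z, islift N w z.
Proof.
have [step hstep] := choice (fun (p : V * V) => GOf p.1 p.2).
pose z := fix z (k : nat) := if k is k'.+1 then step (z k', rp N w k) else a.
exists z; split => // k _.
have e : f (z k) = rp N w k.
  case: k => [|k]; first by rewrite rp0.
  by have [-> _] := hstep (z k, rp N w k.+1).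
have [h1 h2] := hstep (z k, rp N w k.+1); split => //=.
by rewrite -e.
Qed.

Let lift_bound N M w z : 0 <= M -> islift N w z -> en (w - y0) <= M ->
  forall k, (k <= N)%N -> c * en (z k - a) <= k%:R * (M / N%:R).
Proof.
move=> M0 [z0 hz] hw; elim=> [|k IH] hk.
  by rewrite z0 subrr enorm0 mulr0 mul0r.
have [_ hs] := hz k hk; have := IH (ltnW hk) => IHk.
rewrite rp_step in hs.
have hMN : en (w - y0) / N%:R <= M / N%:R by rewrite ler_wpM2r // invr_ge0.
have htri := enorm_tri (z k.+1) (z k) a.
have := ler_wpM2l (ltW c0) htri; rewrite mulrDr => h3.
have -> : k.+1%:R = k%:R + 1 :> R by rewrite -[k.+1]addn1 natrD.
rewrite mulrDl mul1r; lra.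
Qed.

Let lift_K N M w z : 0 <= M -> islift N w z -> en (w - y0) <= M ->
  forall k, (k <= N)%N -> en (z k - a) <= M / c.
Proof.
move=> M0 hl hw k hk; have := lift_bound M0 hl hw hk.
have h1 : k%:R * (M / N%:R) <= M.
  by rewrite mulrA mulrAC -[leRHS]mul1r ler_wpM2r // kN_le1.
move=> h2; rewrite ler_pdivlMr // mulrC; lra.
Qed.

Let liftN N w z : islift N w z -> (0 < N)%N -> f (z N) = w.
Proof.
case: N => // N [_ hz] _; have [-> _] := hz N (ltnSn N); exact: rpN.
Qed.

Let close N M d (hM : 0 <= M) (hd : 0 < d)
  (Kp : forall u, en (u - a) <= M / c + en (b - a) -> forall v, en (v - u) < d -> f v = f u -> v = u)
  (hN : M / N%:R < c * (d / 4)) w1 w2 z1 z2 :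
  en (w1 - y0) <= M -> en (w2 - y0) <= M -> en (w2 - w1) < c * (d / 4) ->
  islift N w1 z1 -> islift N w2 z2 ->
  forall k, (k <= N)%N -> c * en (z2 k - z1 k) <= en (rp N w2 k - rp N w1 k).
Proof.
move=> hw1 hw2 hw l1 l2; elim=> [|k IH] hk.
  by rewrite l1.1 l2.1 subrr enorm0 mulr0 enorm_ge0.
have IHk := IH (ltnW hk).
have [f1 s1] := l1.2 k hk; have [f2 s2] := l2.2 k hk.
have [z' [fz' cz']] := GOf (z1 k.+1) (rp N w2 k.+1).
rewrite f1 in cz'.
have Dle j : (j <= N)%N -> en (rp N w2 j - rp N w1 j) < c * (d / 4).
  move=> jN; rewrite rp_diff; apply: le_lt_trans hw.
  by rewrite -[leRHS]mul1r ler_wpM2r ?enorm_ge0 // kN_le1.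
have D1 := Dle _ hk; have D0 := Dle _ (ltnW hk).
rewrite rp_step in s1; rewrite rp_step in s2.
have st1 : en (w1 - y0) / N%:R <= M / N%:R by rewrite ler_wpM2r // invr_ge0.
have st2 : en (w2 - y0) / N%:R <= M / N%:R by rewrite ler_wpM2r // invr_ge0.
have cdiv X : c * X < c * (d / 4) -> X < d / 4 by rewrite ltr_pM2l.
have e1 : en (z' - z1 k.+1) < d / 4 by apply: cdiv; lra.
have e2 : en (z1 k.+1 - z1 k) < d / 4 by apply: cdiv; lra.
have e3 : en (z1 k - z2 k) < d / 4 by apply: cdiv; rewrite enorm_sym; lra.
have e4 : en (z2 k - z2 k.+1) < d / 4 by apply: cdiv; rewrite enorm_sym; lra.
have t1 := enorm_tri z' (z1 k.+1) (z2 k.+1).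
have t2 := enorm_tri (z1 k.+1) (z1 k) (z2 k.+1).
have t3 := enorm_tri (z1 k) (z2 k) (z2 k.+1).
have eq : z' = z2 k.+1.
  apply: (Kp (z2 k.+1)); last by rewrite fz' f2.
    have := lift_K hM l2 hw2 hk; have := enorm_ge0 (b - a); lra.
  lra.
by rewrite -eq.
Qed.

Lemma inj_ab : a = b.
Proof.
have [M M0 hM] := ellM.
pose K := [set u | en (u - a) <= M / c + en (b - a)].
have cK : compact K.
  apply: (@compact_enorm _ _ K a (M / c + en (b - a))) => //.
  apply: (@preimage_closed _ _ (fun u : V => en (u - a)) [set r | r <= M / c + en (b - a)]).
    by move=> u _; exact: en_cont.
  exact: closed_le.
have [dl dl0 Kp] := unif_LI cK li.
have eta0 : 0 < c * (dl / 4) by rewrite mulr_gt0 // divr_gt0.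
set eta := c * (dl / 4) in eta0.
have [du du0 hdu] : exists2 d, 0 < d & forall s', `[(0:R), 1]%classic s' ->
    forall s, `|s - s'| < d -> en (ell s - ell s') < eta.
  apply: (@near_cov_unif R _ _ (fun d s' => forall s, `|s - s'| < d -> en (ell s - ell s') < eta)).
    exact: segment_compact.
  move=> s0 _; have [d1 d10 hd1] := @ell_cont s0 (eta / 2) ltac:(lra).
  exists [set s' | `|s' - s0| < d1 / 2]; exists (d1 / 2).
    split; last lra.
    by apply: (@nbhsR_lt _ _ (d1 / 2)) => //; lra.
  move=> s' e /= hs' e0 ed s hs.
  have hs0 : `|s - s0| < d1.
    have := ler_distD s' s s0; lra.
  have hs1 : `|s' - s0| < d1 by lra.
  have := hd1 _ hs0; have := hd1 _ hs1; rewrite enorm_sym.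
  have := enorm_tri (ell s) (ell s0) (ell s'); lra.
pose N := (Num.truncn (M / eta)).+1.
have N0 : (0 < N)%N by [].
have hN : M / N%:R < eta.
  have := truncnS_gt (M / eta); rewrite -/N => h.
  rewrite ltr_pdivrMr ?ltr0n // mulrC -ltr_pdivrMr //.
have hb := enorm_ge0 (b - a).
have mn0 : 0 < Num.min du (dl / 4) by rewrite lt_min du0 /=; lra.
pose m := (Num.truncn ((1 + en (b - a)) / Num.min du (dl / 4))).+1.
have m0 : (0 < m)%N by [].
have hm : (1 + en (b - a)) / m%:R < Num.min du (dl / 4).
  have := truncnS_gt ((1 + en (b - a)) / Num.min du (dl / 4)); rewrite -/m => h.
  rewrite ltr_pdivrMr ?ltr0n // mulrC -ltr_pdivrMr //.
have mpos : 0 < m%:R :> R by rewrite ltr0n.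
have gm1 : Num.min du (dl / 4) <= du by rewrite ge_min lexx.
have gm2 : Num.min du (dl / 4) <= dl / 4 by rewrite ge_min lexx orbT.
have hm1 : 1 / m%:R < du.
  apply: le_lt_trans (lt_le_trans hm gm1).
  by rewrite ler_wpM2r ?invr_ge0 ?ler0n //; lra.
have hm2 : en (b - a) / m%:R < dl / 4.
  apply: le_lt_trans (lt_le_trans hm gm2).
  by rewrite ler_wpM2r ?invr_ge0 ?ler0n //; lra.
pose s (j : nat) : R := j%:R / m%:R.
have s01 j : (j <= m)%N -> `[(0:R), 1]%classic (s j).
  by move=> jm; rewrite /= in_itv /= divr_ge0 //= kN_le1.
have sM j : (j <= m)%N -> en (ell (s j) - y0) <= M.
  by move=> /s01; rewrite /= in_itv /= => /andP [h1 h2]; apply: hM; rewrite h1 h2.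
have sS j : s j.+1 - s j = 1 / m%:R.
  by rewrite /s -mulrBl -[j.+1]addn1 natrD addrAC subrr add0r.
have zc : islift N y0 (fun=> a).
  split => // k _; have e k' : rp N y0 k' = y0 by rewrite /rp subrr scaler0 addr0.
  by rewrite !e !subrr !enorm0 mulr0.
have ell0 : ell 0 = y0 by rewrite /ell /xs scale0r addr0.
have ell1 : ell 1 = y0 by rewrite /ell /xs scale1r addrC subrK -fab.
have KP u : K u -> forall v, en (v - u) < dl -> f v = f u -> v = u := Kp u.
have xsK j : (j <= m)%N -> K (xs (s j)).
  move=> /s01; rewrite /= in_itv /= => /andP [h1 h2].
  rewrite /K /= (_ : xs (s j) - a = s j *: (b - a)); last by rewrite /xs addrC addKr.
  rewrite enormZ ger0_norm //.
  have : 0 <= M / c by rewrite divr_ge0 // ltW.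
  have := ler_wpM2r hb h2; rewrite mul1r; lra.
have claim j : (j <= m)%N -> forall z, islift N (ell (s j)) z -> z N = xs (s j).
  elim: j => [|j IH] jm z lz.
    have s0 : s 0 = 0 by rewrite /s mul0r.
    rewrite s0 ell0 in lz *.
    have h00 : en (y0 - y0) <= M by rewrite subrr enorm0.
    have h01 : en (y0 - y0) < eta by rewrite subrr enorm0.
    have := @close N M dl M0 dl0 Kp hN y0 y0 (fun=> a) z h00 h00 h01 zc lz N (leqnn N).
    rewrite subrr enorm0 => h.
    have h2 : en (z N - a) = 0.
      have := enorm_ge0 (z N - a).
      move=> h0; have h3 : en (z N - a) <= 0 by rewrite -(ler_pM2l c0) mulr0.
      by apply: le_anti; rewrite h3 h0.
    rewrite /xs scale0r addr0; apply/eqP; rewrite -subr_eq0; apply/eqP.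
    exact: enorm_eq0.
  have jm' : (j <= m)%N by apply: ltnW.
  have [z1 l1] := lift_ex N (ell (s j)).
  have IH1 := IH jm' z1 l1.
  have hsd : `|s j.+1 - s j| < du by rewrite sS ger0_norm // divr_ge0 // ler0n.
  have hw := hdu (s j) (s01 _ jm') (s j.+1) hsd.
  have := @close N M dl M0 dl0 Kp hN (ell (s j)) (ell (s j.+1)) z1 z
    (sM _ jm') (sM _ jm) hw l1 lz N (leqnn N).
  rewrite !rpN // IH1 => hc.
  have e1 : en (z N - xs (s j)) < dl / 4.
    by rewrite -(ltr_pM2l c0); apply: le_lt_trans hc hw.
  have e2 : en (xs (s j) - xs (s j.+1)) < dl / 4.
    by rewrite xs_dist distrC sS ger0_norm ?divr_ge0 ?ler0n // mulrC mul1r.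
  apply: (KP _ (xsK _ jm)); last by rewrite (liftN lz).
  by have := enorm_tri (z N) (xs (s j)) (xs (s j.+1)); lra.
have sm : s m = 1 by rewrite /s divff // gt_eqF.
have := claim m (leqnn m) (fun=> a); rewrite sm ell1 => /(_ zc).
by rewrite /xs scale1r addrC subrK.
Qed.

End Inj.

Lemma min_pos (R : realType) (p q : R) : 0 < p -> 0 < q ->
  exists2 r, 0 < r & r <= p /\ r <= q.
Proof.
move=> p0 q0; exists (Num.min p q); first by rewrite lt_min p0 q0.
by rewrite !ge_min !lexx ?orbT.
Qed.

Section Local.
Variables (R : realType) (n : nat).
Local Notation V := 'rV[R]_n.
Local Notation en := (@enorm R n).
Variables (f h : V -> V) (x : V) (c l al : R).
Hypotheses (cf : continuous f) (c0 : 0 < c) (l0 : 0 < l) (cal : c < al - l)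
  (hx : h x = f x) (lip : lip_near (fun z => f z - h z) x l)
  (lo : lin_open_with h x al)
  (sr : exists U W, nbhs x U /\ nbhs (h x) W /\ forall y, W y -> exists! z, U z /\ h z = y).

Let g z := f z - h z.
Variables (be : R).
Hypotheses (beal : be < al) (cbe : c < be - l).
Let lbe : l < be. Proof. by have := c0; have := cbe; lra. Qed.
Let be0 : 0 < be. Proof. by have := lbe; have := l0; lra. Qed.

Ltac cp := have c0' := c0; have l0' := l0; have cal' := cal; have beal' := beal;
  have cbe' := cbe; have be0' := be0; have lbe' := lbe.

Let data : exists r0, exists2 om, 0 < r0 /\ 0 < om &
  [/\ (forall u v, en (u - x) < 3 * r0 -> en (v - x) < 3 * r0 -> en (g u - g v) <= l * en (u - v)),
      (forall u, en (u - x) < r0 -> forall y', en (y' - f x) < om ->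
         exists z', h z' = y' /\ be * en (z' - u) <= en (y' - h u)),
      (forall u, en (u - x) < r0 -> en (h u - f x) < om / 2) &
      (forall y, en (y - f x) < om -> forall z1 z2, en (z1 - x) < 3 * r0 -> en (z2 - x) < 3 * r0 ->
         h z1 = y -> h z2 = y -> z1 = z2)].
Proof.
cp.
case: sr => U1 [W1 [/nbhs_enorm [r1 r10 hU1] [+ uq]]].
rewrite hx => /nbhs_enorm [w1 w10 hW1].
case: lo => U2 [W2 [/nbhs_enorm [r2 r20 hU2] [+ op]]].
rewrite hx => /nbhs_enorm [w2 w20 hW2].
case: lip => U3 [/nbhs_enorm [r3 r30 hU3] lp].
have [om om0 [om1 om2]] := min_pos w10 w20.
have [tau tau0 htau] := cont_V cf x (e := om / 4) ltac:(lra).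
have [p1 p10 [p11 p12]] := min_pos (divr_gt0 r10 (ltr0n R 3)) r20.
have [p2 p20 [p21 p22]] := min_pos (divr_gt0 r30 (ltr0n R 3)) tau0.
have [p3 p30 [p31 p32]] := min_pos p10 p20.
have [r0 r00 [r01 r02]] := min_pos p30 (divr_gt0 om0 (mulr_gt0 (ltr0n R 4) l0)).
have r0r1 : 3 * r0 <= r1.
  by have := le_trans r01 (le_trans p31 p11); rewrite ler_pdivlMr //; lra.
have r0r2 : r0 <= r2 by apply: le_trans r01 (le_trans p31 p12).
have r0r3 : 3 * r0 <= r3.
  by have := le_trans r01 (le_trans p32 p21); rewrite ler_pdivlMr //; lra.
have r0t : r0 <= tau by apply: le_trans r01 (le_trans p32 p22).
have hL : forall u v, en (u - x) < 3 * r0 -> en (v - x) < 3 * r0 -> en (g u - g v) <= l * en (u - v).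
  by move=> u v hu hv; apply: lp; [apply: hU3 | apply: hU3]; lra.
exists r0, om => //; split => //.
- move=> u hu y' hy'.
  have [->|yne] := eqVneq y' (h u).
    by exists u; rewrite subrr enorm0 mulr0 subrr enorm0.
  have D0 : 0 < en (y' - h u).
    rewrite lt0r enorm_ge0 andbT; apply/eqP => /enorm_eq0/eqP.
    by rewrite subr_eq0 (negbTE yne).
  have := op u (en (y' - h u) / be) (hU2 _ ltac:(lra)) (divr_gt0 D0 be0) y'.
  case.
    split; last by apply: hW2; lra.
    by rewrite /oball /= mulrA ltr_pdivlMr //; nra.
  move=> z' /= hz' hz'y; exists z'; split => //.
  by move: hz'; rewrite /oball /= ltr_pdivlMr // mulrC => /ltW.
- move=> u hu.
  have e : h u - f x = (f u - f x) - (g u - g x) by rewrite /g hx subrr subr0; apply/rowP => i; rewrite !mxE; ring.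
  rewrite e; apply: le_lt_trans (enormB _ _) _.
  have h1 := htau u ltac:(lra).
  have h2 := hL u x ltac:(lra) ltac:(rewrite subrr enorm0; lra).
  have h3 : l * en (u - x) <= l * r0 by rewrite ler_pM2l // ltW.
  have h4 : l * r0 <= om / 4.
    by move: r02; rewrite ler_pdivlMr ?mulr_gt0 // => h5; rewrite ler_pdivlMr //; lra.
  lra.
- move=> y hy z1 z2 hz1 hz2 e1 e2.
  have [z0 [_ hz0]] := uq y (hW1 _ ltac:(lra)).
  have -> : z1 = z0 by symmetry; apply: hz0; split => //; apply: hU1; lra.
  by apply: hz0; split => //; apply: hU1; lra.
Qed.

Lemma LIc_loc : LIc f x.
Proof.
cp.
have [r0 [om [r00 om0] [hL hO hC hU]]] := data.
exists r0 => // u v hu hv fuv.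
have hv' := hC v hv.
have e : h v - h u = g u - g v.
  by rewrite /g fuv; apply/rowP => i; rewrite !mxE; ring.
have huv : en (u - v) < 2 * r0.
  by have := enorm_tri u x v; rewrite [en (x - v)]enorm_sym; lra.
have hh : en (h v - h u) <= l * en (u - v).
  by rewrite e; apply: hL; lra.
have [z [hz1 hz2]] := hO u hu (h v) ltac:(lra).
have hD := enorm_ge0 (u - v).
have hzu : en (z - u) <= en (u - v).
  rewrite -(ler_pM2l be0).
  have : l * en (u - v) <= be * en (u - v) by apply: ler_wpM2r => //; exact: ltW.
  lra.
have hzx : en (z - x) < 3 * r0 by have := enorm_tri z u x; lra.
have zv : z = v by apply: (hU (h v) ltac:(lra)) => //; lra.
rewrite zv enorm_sym in hz2.
have h0 : en (u - v) = 0.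
  apply: le_anti; rewrite hD andbT.
  have : (be - l) * en (u - v) <= 0 by rewrite mulrBl; lra.
  by rewrite pmulr_rle0 // subr_gt0.
by apply/eqP; rewrite -subr_eq0; apply/eqP/enorm_eq0.
Qed.

Lemma LOc_loc : LOc f c x.
Proof.
cp.
have [r0 [om [r00 om0] [hL hO hC hU]]] := data.
have ka0 : 0 < be - l by lra.
have [e0 e00 [e01 e02]] := min_pos (divr_gt0 (mulr_gt0 ka0 r00) (ltr0n R 2)) (divr_gt0 om0 (ltr0n R 2)).
exists e0 => // y hy.
have [||z [hz1 hz2]] := @ekeland _ _ (fun z => en (f z - y)) x (be - l) ka0 (@phi_cont _ _ f y cf).
- by move=> z; exact: enorm_ge0.
- move=> z /= hz zpos.
  set E := en (f z - y) in hz zpos *.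
  have hex : en (f x - y) = en (y - f x) by rewrite enorm_sym.
  rewrite hex in hz.
  have hzx0 := enorm_ge0 (z - x).
  have hprod : 0 <= (be - l) * en (z - x) by rewrite mulr_ge0 // ltW.
  have hzx : en (z - x) < r0 / 2.
    rewrite -(ltr_pM2l ka0).
    have : (be - l) * (r0 / 2) = (be - l) * r0 / 2 by rewrite mulrA.
    nra.
  set y' := h z + (y - f z).
  have hy' : en (y' - f x) < om.
    have -> : y' - f x = (h z - f x) + (y - f z).
      by rewrite /y'; apply/rowP => i; rewrite !mxE; ring.
    apply: le_lt_trans (enormD _ _) _.
    have := hC z ltac:(lra); rewrite [en (y - f z)]enorm_sym -/E; lra.
  have [z' [hz'1 hz'2]] := hO z ltac:(lra) y' hy'.
  have ey : y' - h z = y - f z by rewrite /y' [h z + _]addrC addrK.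
  rewrite ey [en (y - f z)]enorm_sym -/E in hz'2.
  set D := en (z' - z) in hz'2 *.
  have D0 : 0 <= D by exact: enorm_ge0.
  have hDr : D < r0 / 2.
    rewrite -(ltr_pM2l be0).
    have : (be - l) * r0 / 2 <= be * (r0 / 2).
      by rewrite -mulrA ler_pM2r ?divr_gt0 //; lra.
    lra.
  have hz'x : en (z' - x) <= D + en (z - x) by exact: enorm_tri.
  have ef : f z' - y = g z' - g z.
    by rewrite /g hz'1; apply/rowP => i; rewrite !mxE; ring.
  have hphi : en (f z' - y) <= l * D.
    by rewrite ef; apply: hL; lra.
  exists z'; split.
    have [D00|Dpos] := eqVneq D 0; first by rewrite D00 mulr0 in hphi; lra.
    have : l * D < be * D.
      by rewrite ltr_pM2r // lt0r Dpos D0.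
    lra.
  have := ler_wpM2l (ltW ka0) hz'x; rewrite mulrDr mulrBl => h1.
  rewrite mulrBl; lra.
- exists z; split.
    by apply/eqP; rewrite -subr_eq0; apply/eqP/enorm_eq0.
  rewrite [en (y - f x)]enorm_sym.
  apply: le_trans hz2; apply: ler_wpM2r; [exact: enorm_ge0 | exact: ltW].
Qed.

End Local.

Lemma local_all (R : realType) (n : nat) (f : 'rV[R]_n -> 'rV[R]_n)
  (mu : R) (h : 'rV[R]_n -> 'rV[R]_n -> 'rV[R]_n) (c : R) :
  continuous f -> 0 <= mu -> 0 < c ->
  (forall x, strict_estimator mu f (h x) x /\ strongly_regular (h x) x) ->
  ((mu + c)%:E < ereal_inf [set lop (h x) x | x in [set: 'rV[R]_n]])%E ->
  forall x, LOc f c x /\ LIc f x.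
Proof.
move=> cf mu0 c0 H hs x.
have [[hx hlip] [_ hsr]] := H x.
have hl : (ereal_inf [set lop (h x) x | x in [set: 'rV[R]_n]] <= lop (h x) x)%E.
  by apply: ereal_inf_lbound; exists x.
have := lt_le_trans hs hl; rewrite /lop => /ereal_sup_gt [y [->|[a [a0 hlo] <-]]].
  by rewrite lte_fin; lra.
rewrite lte_fin => ha.
have : (lip (fun z => (f z - h x z)%R) x < (a - c)%:E)%E.
  by apply: le_lt_trans hlip _; rewrite lte_fin; lra.
move=> /ereal_inf_lt [y' [l [l0 hlip'] <-]]; rewrite lte_fin => hl'.
have cal : c < a - l by lra.
have beal : (a + l + c) / 2 < a by lra.
have cbe : c < (a + l + c) / 2 - l by lra.
split.
  exact: (LOc_loc cf c0 l0 cal hx hlip' hlo hsr beal cbe).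
exact: (LIc_loc cf c0 l0 cal hx hlip' hlo hsr beal cbe).
Qed.

Lemma cex (R : realType) (mu : R) (s : \bar R) : (mu%:E < s)%E ->
  exists2 c, 0 < c & ((mu + c)%:E < s)%E.
Proof.
case: s => [s| |] //.
  by rewrite !lte_fin => hs; exists ((s - mu) / 2); rewrite ?lte_fin; lra.
by move=> _; exists 1; rewrite ?ltry.
Qed.

Lemma final_ineq (R : realType) (mu : R) (s : \bar R) (D E : R) :
  0 <= D -> 0 <= E -> (mu%:E < s)%E ->
  (forall c, 0 < c -> ((mu + c)%:E < s)%E -> c * D <= E) ->
  ((s - mu%:E) * D%:E <= E%:E)%E.
Proof.
move=> D0 E0 hs lipc.
have [Dz|Dpos] := eqVneq D 0; first by rewrite Dz mule0 lee_fin.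
have Dp : 0 < D by rewrite lt0r Dpos D0.
move: hs lipc; case: s => [s| |] //.
- rewrite lte_fin => hs lipc.
  rewrite -EFinB -EFinM lee_fin.
  rewrite leNgt; apply/negP => hlt.
  pose c := (E / D + (s - mu)) / 2.
  have hED : E / D * D = E by rewrite divfK // gt_eqF.
  have hc : c * D = (E + (s - mu) * D) / 2 by rewrite /c mulrAC mulrDl hED.
  have ED0 : 0 <= E / D by rewrite divr_ge0.
  have c1 : 0 < c by rewrite /c; lra.
  have c2 : c < s - mu.
    rewrite /c; have : E / D < s - mu by rewrite ltr_pdivrMr.
    lra.
  have := lipc c c1; rewrite lte_fin => /(_ ltac:(lra)); lra.
- move=> _ lipc; exfalso.
  pose c := (E + 1) / D.
  have c1 : 0 < c by rewrite /c divr_gt0 //; lra.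
  have := lipc c c1 (ltry _); rewrite /c divfK ?gt_eqF //; lra.
Qed.

Unset Implicit Arguments.

Theorem mainTheorem5 (R : realType) (n : nat) (f : 'rV[R]_n -> 'rV[R]_n)
  (mu : R) (h : 'rV[R]_n -> 'rV[R]_n -> 'rV[R]_n) :
  continuous f -> 0 <= mu ->
  (forall x, strict_estimator mu f (h x) x /\ strongly_regular (h x) x) ->
  let sigma := ereal_inf [set lop (h x) x | x in [set: 'rV[R]_n]] in
  (mu%:E < sigma)%E ->
  exists g : 'rV[R]_n -> 'rV[R]_n,
    cancel f g /\ cancel g f /\
    forall y1 y2, ((sigma - mu%:E) * (enorm (g y1 - g y2))%:E
                   <= (enorm (y1 - y2))%:E)%E.
Proof.
move=> cf mu0 H sigma hs.
have key c : 0 < c -> ((mu + c)%:E < sigma)%E -> forall x, LOc f c x /\ LIc f x.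
  by move=> c0 hc; exact: (local_all cf mu0 c0 H hc).
have [c0 c00 hc0] := cex hs.
have lo0 x := (key c0 c00 hc0 x).1.
have li0 x := (key c0 c00 hc0 x).2.
have finj : injective f by move=> a b; exact: (inj_ab c00 cf lo0 li0).
have fsurj y : exists x, f x = y.
  by have [z [hz _]] := GO c00 cf lo0 0 y; exists z.
have [g hg] := choice fsurj.
exists g; split; first by move=> x; apply: finj; rewrite hg.
split; first exact: hg.
move=> y1 y2.
apply: final_ineq => //; [exact: enorm_ge0 | exact: enorm_ge0 |].
move=> c1 c10 hc1.
have lo1 x := (key c1 c10 hc1 x).1.
have [z [hz1 hz2]] := GO c10 cf lo1 (g y2) y1.
have -> : g y1 = z by apply: finj; rewrite hg.
by rewrite hg in hz2.
Qed.
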